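(* There exists a binary Euclidean LCD $[29,11,9]$ code.
   Context: A binary $[n,k,d]$ code is a $k$-dimensional subspace $C\subseteq\mathbb{F}_2^n$ with minimum nonzero Hamming weight $d$; it is Euclidean LCD if $C\cap C^{\perp_E}=\{0\}$, where $C^{\perp_E}$ is the dual with respect to $\langle x,y\rangle_E=\sum x_iy_i$. *)

(* Defs.v *)
From HB Require Import structures.
From mathcomp Require Import all_boot all_order all_algebra.
Set Implicit Arguments. Unset Strict Implicit. Unset Printing Implicit Defensive.
Import GRing.Theory.
Local Open Scope ring_scope.

Definition hweight (n : nat) (x : 'rV['F_2]_n) : nat := #|[set i | x 0 i != 0]|.

Definition einner (n : nat) (x y : 'rV['F_2]_n) : 'F_2 := \sum_(i < n) x 0 i * y 0 i.

Definition min_distance (n : nat) (C : {vspace 'rV['F_2]_n}) (d : nat) : Prop :=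
  (exists2 x, x \in C & (x != 0) && (hweight x == d)) /\
  (forall x, x \in C -> x != 0 -> (d <= hweight x)%N).

Definition in_euclid_dual (n : nat) (C : {vspace 'rV['F_2]_n}) (x : 'rV['F_2]_n) : Prop :=
  forall y, y \in C -> einner x y = 0.

Definition euclid_LCD (n : nat) (C : {vspace 'rV['F_2]_n}) : Prop :=
  forall x, x \in C -> in_euclid_dual C x -> x = 0.

Definition is_code (n k d : nat) (C : {vspace 'rV['F_2]_n}) : Prop :=
  \dim C = k /\ min_distance C d.
Arguments is_code n k d C : clear implicits.

(* Main.v *)
Require Import Defs.
From mathcomp Require Import all_boot all_order all_algebra.
Set Implicit Arguments. Unset Strict Implicit. Unset Printing Implicit Defensive.
Import GRing.Theory.

Definition tbl : seq (seq nat) := [::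
  [:: 1; 0; 0; 0; 0; 0; 0; 0; 0; 0; 0; 0; 1; 1; 1; 0; 0; 0; 0; 1; 1; 0; 1; 1; 0; 1; 1; 1; 0];
  [:: 0; 1; 0; 0; 0; 0; 0; 0; 0; 0; 0; 0; 1; 1; 0; 1; 1; 0; 1; 0; 1; 0; 0; 1; 1; 1; 1; 0; 1];
  [:: 0; 0; 1; 0; 0; 0; 0; 0; 0; 0; 0; 1; 1; 1; 0; 1; 0; 0; 0; 0; 1; 1; 0; 0; 0; 1; 1; 0; 0];
  [:: 0; 0; 0; 1; 0; 0; 0; 0; 0; 0; 0; 1; 0; 1; 1; 1; 0; 0; 0; 1; 1; 0; 0; 1; 1; 1; 0; 0; 1];
  [:: 0; 0; 0; 0; 1; 0; 0; 0; 0; 0; 0; 1; 1; 0; 1; 0; 0; 1; 1; 0; 1; 0; 1; 1; 1; 0; 1; 0; 1];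
  [:: 0; 0; 0; 0; 0; 1; 0; 0; 0; 0; 0; 0; 0; 0; 1; 0; 0; 1; 1; 0; 1; 1; 0; 0; 1; 1; 1; 1; 0];
  [:: 0; 0; 0; 0; 0; 0; 1; 0; 0; 0; 0; 0; 0; 1; 1; 1; 1; 1; 1; 0; 0; 0; 0; 1; 0; 0; 1; 0; 0];
  [:: 0; 0; 0; 0; 0; 0; 0; 1; 0; 0; 0; 0; 1; 1; 0; 0; 1; 0; 0; 0; 0; 1; 1; 0; 1; 0; 1; 1; 0];
  [:: 0; 0; 0; 0; 0; 0; 0; 0; 1; 0; 0; 0; 1; 0; 1; 0; 1; 1; 0; 1; 1; 0; 0; 0; 0; 0; 1; 1; 1];
  [:: 0; 0; 0; 0; 0; 0; 0; 0; 0; 1; 0; 1; 1; 1; 0; 1; 0; 1; 0; 1; 0; 1; 1; 0; 1; 1; 0; 1; 0];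
  [:: 0; 0; 0; 0; 0; 0; 0; 0; 0; 0; 1; 0; 1; 0; 1; 0; 1; 0; 1; 0; 1; 0; 0; 1; 1; 0; 0; 1; 0]
].

Definition g (i k : nat) : bool := nth 0%N (nth [::] tbl i) k == 1%N.

Definition word (bs : seq bool) (k : nat) : bool :=
  odd (sumn [seq nat_of_bool (nth false bs i && g i k) | i <- iota 0 11]).
Definition weight (bs : seq bool) : nat :=
  sumn [seq nat_of_bool (word bs k) | k <- iota 0 29].
Definition inner (bs : seq bool) (j : nat) : bool :=
  odd (sumn [seq nat_of_bool (word bs k && g j k) | k <- iota 0 29]).
Definition check (bs : seq bool) : bool :=
  has id bs ==> ((9 <= weight bs)%N && has (inner bs) (iota 0 11)).

Fixpoint allbs (n : nat) : seq (seq bool) :=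
  if n is m.+1 then [seq b :: s | b <- [:: true; false], s <- allbs m] else [:: [::]].

Lemma check_all : all check (allbs 11).
Proof. vm_compute. reflexivity. Qed.

Lemma allbsP n (P : pred (seq bool)) : all P (allbs n) ->
  forall bs, size bs = n -> P bs.
Proof.
elim: n P => [|n IH] P /=.
  by move=> /andP[HP _] [|//] _.
move=> H [|b bs] //= [Hs].
rewrite /= cats0 all_cat !all_map in H; case/andP: H => H1 H2.
by case: b; [exact: (IH _ H1) | exact: (IH _ H2)].
Qed.

Definition bs0 : seq bool := [:: false; false; true; false; false; false; false; false; false; false; false].
Lemma weight_bs0 : weight bs0 = 9%N.
Proof. vm_compute. reflexivity. Qed.

Local Open Scope ring_scope.

Lemma F2_nat (m : nat) : (m%:R : 'F_2) = (odd m)%:R.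
Proof.
elim: m => // m IH; rewrite mulrS IH /=.
by case: (odd m); apply/val_inj.
Qed.

Lemma F2_b (x : 'F_2) : x = (x != 0)%:R.
Proof. by case: x => [[|[|m]] Hm] //; apply/val_inj. Qed.

Lemma sum_nat n (F : nat -> nat) : (\sum_(i < n) F i)%N = sumn [seq F i | i <- iota 0 n].
Proof. by rewrite sumnE big_map -(big_mkord xpredT) /index_iota subn0. Qed.

Definition gv (i : nat) : 'rV['F_2]_29 := \row_(k < 29) (g i k)%:R.
Definition X : 11.-tuple 'rV['F_2]_29 := [tuple gv i | i < 11].

Lemma X_nth (i : 'I_11) : X`_i = gv i.
Proof. by rewrite -tnth_nth tnth_mktuple. Qed.

Section Bridge.
Variable a : 'I_11 -> 'F_2.
Let bs := mkseq (fun i => a (inord i) != 0) 11.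
Let x := \sum_(i < 11) a i *: X`_i.

Lemma x_entry (k : 'I_29) : x 0 k = (word bs k)%:R.
Proof.
rewrite /x summxE.
under eq_bigr => i _ do rewrite X_nth !mxE (F2_b (a i)) -natrM.
rewrite -natr_sum F2_nat /word -sum_nat; congr ((odd _)%:R).
apply: eq_bigr => i _; rewrite /bs nth_mkseq // inord_val.
by case: (a i != 0); case: (g i k).
Qed.


Lemma x_weight : hweight x = weight bs.
Proof.
rewrite /hweight -sum1_card big_mkcond /= /weight -sum_nat.
by apply: eq_bigr => k _; rewrite inE x_entry; case: word.
Qed.

Lemma x_inner (j : 'I_11) : einner x X`_j = (inner bs j)%:R.
Proof.
rewrite /einner; under eq_bigr => k _ do rewrite x_entry X_nth mxE -natrM.
rewrite -natr_sum F2_nat /inner -sum_nat; congr ((odd _)%:R).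
by apply: eq_bigr => k _; case: word; case: g.
Qed.

Lemma a_zero : ~~ has id bs -> forall i, a i = 0.
Proof.
move=> H i.
apply/eqP; apply: contraNT H => Hi; apply/(has_nthP false); exists i.
  by rewrite size_mkseq.
by rewrite /bs nth_mkseq // inord_val.
Qed.

Lemma x_zero : ~~ has id bs -> x = 0.
Proof. by move=> H; rewrite /x big1 // => i _; rewrite a_zero // scale0r. Qed.

Lemma x_check : check bs.
Proof. by apply: (allbsP check_all); rewrite size_mkseq. Qed.

End Bridge.

Lemma hweight0 n : hweight (0 : 'rV['F_2]_n) = 0%N.
Proof.
rewrite /hweight; apply/eqP; rewrite cards_eq0; apply/eqP/setP => i.
by rewrite !inE mxE eqxx.
Qed.

Lemma memC v : v \in <<X>>%VS -> exists a : 'I_11 -> 'F_2, v = \sum_(i < 11) a i *: X`_i.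
Proof. by move=> /coord_span ->; eexists. Qed.

Lemma X_in (i : 'I_11) : X`_i \in <<X>>%VS.
Proof. by apply: memv_span; apply: mem_nth; rewrite size_tuple. Qed.

Definition a0 (i : 'I_11) : 'F_2 := (nth false bs0 i)%:R.
Lemma bs_a0 : mkseq (fun i => a0 (inord i) != 0) 11 = bs0.
Proof.
apply: (@eq_from_nth _ false); rewrite ?size_mkseq // => i Hi.
by rewrite nth_mkseq // /a0 inordK //; case: nth.
Qed.

Theorem proposition4p5 :
  exists C : {vspace 'rV['F_2]_29}, is_code 29 11 9 C /\ euclid_LCD C.
Proof.
exists <<X>>%VS; split; [split|].
- have Hf : free X.
    apply/freeP => k Hk i.
    have := x_check k; rewrite /check.
    case E: has => /=.
      by rewrite -x_weight Hk hweight0.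
    by move: E => /negbT /a_zero ->.
  by move/eqP: Hf; rewrite size_tuple.
- split.
    exists (\sum_(i < 11) a0 i *: X`_i).
      by apply: rpred_sum => i _; apply: rpredZ; apply: X_in.
    by rewrite x_weight bs_a0 weight_bs0 andbT; apply/eqP => H;
       move: (x_weight a0); rewrite H hweight0 bs_a0 weight_bs0.
  move=> x /memC [a ->] Hx.
  have := x_check a; rewrite /check; case E: has => /=.
    by rewrite x_weight => /andP[].
  by move: Hx; rewrite (x_zero (negbT E)) eqxx.
- move=> x /memC [a ->] Hd.
  have := x_check a; rewrite /check; case E: has; last by rewrite (x_zero (negbT E)).
  move=> /andP[_ Hh]; case/hasP: Hh => j; rewrite mem_iota add0n => /andP[_ Hj] Hin.
  have := Hd _ (X_in (Ordinal Hj)); rewrite x_inner /= Hin => /eqP.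
  by rewrite oner_eq0.
Qed.
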